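(* Fix an iteration index $t$ and an agent $p$. Let $w^{t+1},\lambda^t_p,z^t_p\in\mathbb{R}^{J\times K}$, $\rho^t>0$ and $\delta^t>0$ be given and independent of the data. For a dataset $\mathcal{D}$ and $\xi\in\mathbb{R}^{J\times K}$ put $$G^t(z;\mathcal{D},\xi)=\langle f'_p(z^t_p;\mathcal{D}),z\rangle+\tfrac{\rho^t}{2}\big\|w^{t+1}-z+\tfrac{1}{\rho^t}(\lambda^t_p-\xi)\big\|^2,$$ and let $$z^{t+1}_p(\mathcal{D})=\operatorname{argmin}_{z\in\mathcal{W}\cap\widehat{\mathcal{W}}^t_p}\ G^t(z;\mathcal{D},\tilde\xi^t_p),\qquad \widehat{\mathcal{W}}^t_p=\{z\in\mathbb{R}^{J\times K}:\|z-z^t_p\|\le\delta^t\},$$ where $\tilde\xi^t_p$ has i.i.d. Laplace entries with mean $0$ and scale $\bar\Delta^t_p/\bar\epsilon$ (joint density proportional to $\exp(-\bar\epsilon\|\tilde\xi^t_p\|_1/\bar\Delta^t_p)$), with $\bar\epsilon>0$ and $\bar\Delta^t_p=\max_{\mathcal{D}'_p\in\widehat{\mathcal{D}}_p}\|f'_p(z^t_p;\mathcal{D}_p)-f'_p(z^t_p;\mathcal{D}'_p)\|_1$, the same noise distribution being used for $\mathcal{D}_p$ and its neighbours. Then for all measurable $\mathcal{S}\subset\mathbb{R}^{J\times K}$ and all $\mathcal{D}'_p\in\widehat{\mathcal{D}}_p$, $$e^{-\bar\epsilon}\,\mathbb{P}(z^{t+1}_p(\mathcal{D}'_p)\in\mathcal{S})\le\mathbb{P}(z^{t+1}_p(\mathcal{D}_p)\in\mathcal{S})\le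 e^{\bar\epsilon}\,\mathbb{P}(z^{t+1}_p(\mathcal{D}'_p)\in\mathcal{S}).$$
   Context: Setting: $P,J,K$ positive integers; $\mathbb{R}^{J\times K}$ carries the Frobenius inner product and norm $\|\cdot\|$; $\|\cdot\|_1$ is the entrywise $\ell_1$-norm. Agent $p$ holds $\mathcal{D}_p=\{(x_{pi},y_{pi})\}_{i=1}^{I_p}$, $x_{pi}\in\mathbb{R}^J$, $y_{pi}\in\mathbb{R}^K$, $I=\sum_pI_p$. With a convex loss $\varphi(\cdot;x,y)$ and convex regularizer $r$ on $\mathbb{R}^{J\times K}$ and $\beta>0$, $f_p(z;\mathcal{D}_p)=\frac1I\sum_{i=1}^{I_p}\varphi(z;x_{pi},y_{pi})+\frac\beta Pr(z)$, and $f'_p(z;\mathcal{D})$ is a fixed subgradient of $f_p(\cdot;\mathcal{D})$ at $z$. $\mathcal{W}\subset\mathbb{R}^{J\times K}$ is compact convex, and $\mathcal{W}\cap\widehat{\mathcal{W}}^t_p=\{z:h^t_m(z)\le0,\ m\in[M]\}$ with each $h^t_m$ convex and twice continuously differentiable. $\widehat{\mathcal{D}}_p$ is the collection of datasets differing from $\mathcal{D}_p$ in a single entry. *)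

(* Defs.v *)
From HB Require Import structures.
From mathcomp Require Import all_boot all_order all_algebra.
From mathcomp Require Import all_classical all_reals all_analysis.
Set Implicit Arguments. Unset Strict Implicit. Unset Printing Implicit Defensive.
Import Order.TTheory GRing.Theory Num.Theory.
Import numFieldNormedType.Exports.
Local Open Scope classical_set_scope.
Local Open Scope ring_scope.

Section Defs.
Variables (R : realType) (J K : nat).
Notation mat := 'M[R]_(J, K).

Definition frob (A B : mat) : R := \sum_(j < J) \sum_(k < K) A j k * B j k.
Definition fnorm (A : mat) : R := Num.sqrt (frob A A).
Definition l1norm (A : mat) : R := \sum_(j < J) \sum_(k < K) `|A j k|.

Definition convex_fun (f : mat -> R) : Prop :=
  forall (a b : mat) (s : R), 0 <= s <= 1 ->
    f (s *: a + (1 - s) *: b) <= s * f a + (1 - s) * f b.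

Definition convex_mset (W : set mat) : Prop :=
  forall (a b : mat) (s : R), 0 <= s <= 1 -> W a -> W b ->
    W (s *: a + (1 - s) *: b).

Definition is_subgradient (f : mat -> R) (z g : mat) : Prop :=
  forall u : mat, f z + frob g (u - z) <= f u.

Definition mx_borel (S : set mat) : Prop := <<s [set U : set mat | open U] >> S.

Definition datum := ('cV[R]_J * 'cV[R]_K)%type.

Definition neighbor (D D' : seq datum) : Prop :=
  exists (i : nat) (e : datum), (i < size D)%N /\ D' = set_nth (0, 0) D i e.

Definition laplace_pdf (b x : R) : R := (2 * b)^-1 * expR (- (`|x| / b)).

End Defs.

Section Defs2.
Variables (R : realType) (J K : nat).
Notation mat := 'M[R]_(J, K).

Definition fobj (Itot P : nat) (beta : R) (phi : mat -> 'cV[R]_J -> 'cV[R]_K -> R)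
  (r : mat -> R) (D : seq (datum R J K)) (z : mat) : R :=
  (Itot%:R)^-1 * \sum_(e <- D) phi z e.1 e.2 + beta / P%:R * r z.

(* G^t(z; D, xi) with g = f'_p(z^t_p; D) *)
Definition Gobj (g w lam xi : mat) (rho : R) (z : mat) : R :=
  frob g z + rho / 2 * (fnorm (w - z + rho^-1 *: (lam - xi))) ^+ 2.

End Defs2.

(* Main.v *)
Require Import Defs.
From HB Require Import structures.
From mathcomp Require Import all_boot all_order all_algebra.
From mathcomp Require Import all_classical all_reals all_analysis.
From mathcomp Require Import ring lra measurable_realfun.
Import Order.TTheory GRing.Theory Num.Theory.
Import numFieldNormedType.Exports.
Local Open Scope classical_set_scope.
Local Open Scope ring_scope.

Lemma mxballE (R : realType) J K (x y : 'M[R]_(J,K)) e :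
  ball x e y <-> (0 < e /\ forall i j, `|x i j - y i j| < e).
Proof. rewrite /ball /=. split; move=> [h1 h2]; split => // i j; move: (h2 i j); rewrite /ball /=; done. Qed.

Lemma openP (R : realType) J K (U : set 'M[R]_(J,K)) :
  open U -> forall x, U x -> exists2 e, 0 < e & ball x e `<=` U.
Proof. rewrite openE => h x Ux. have := h x Ux. rewrite /interior => /nbhs_ballP. case => e e0 he. by exists e. Qed.

Arguments openP {R J K U}.
Arguments mxballE {R J K x y e}.

Section Frob.
Variables (R : realType) (J K : nat).
Local Notation mat := 'M[R]_(J, K).
Implicit Types (a b c g w lam xi z zt : mat) (rho : R).

Lemma frobC a b : frob a b = frob b a.
Proof. by apply: eq_bigr => j _; apply: eq_bigr => k _; rewrite mulrC. Qed.

Lemma frobDl a b c : frob (a + b) c = frob a c + frob b c.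
Proof.
rewrite /frob -big_split; apply: eq_bigr => j _.
by rewrite -big_split; apply: eq_bigr => k _; rewrite mxE mulrDl.
Qed.

Lemma frobZl s a c : frob (s *: a) c = s * frob a c.
Proof.
rewrite /frob mulr_sumr; apply: eq_bigr => j _.
by rewrite mulr_sumr; apply: eq_bigr => k _; rewrite mxE mulrA.
Qed.

Lemma frobNl a c : frob (- a) c = - frob a c.
Proof. by rewrite -scaleN1r frobZl mulN1r. Qed.

Lemma frobDr a b c : frob c (a + b) = frob c a + frob c b.
Proof. by rewrite frobC frobDl !(frobC c). Qed.
Lemma frobZr s a c : frob c (s *: a) = s * frob c a.
Proof. by rewrite frobC frobZl frobC. Qed.
Lemma frobNr a c : frob c (- a) = - frob c a.
Proof. by rewrite frobC frobNl frobC. Qed.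
Lemma frob0l c : frob 0 c = 0.
Proof. by rewrite -(scale0r 0) frobZl mul0r. Qed.
Lemma frob0r c : frob c 0 = 0.
Proof. by rewrite frobC frob0l. Qed.

Lemma frob_ge0 a : 0 <= frob a a.
Proof. by apply: sumr_ge0 => j _; apply: sumr_ge0 => k _; rewrite -expr2 sqr_ge0. Qed.

Lemma frob_entry a j k : (a j k) ^+ 2 <= frob a a.
Proof.
rewrite /frob (bigD1 j) //= (bigD1 k) //= -addrA expr2 lerDl.
apply: addr_ge0; first by apply: sumr_ge0 => i _; rewrite -expr2 sqr_ge0.
by apply: sumr_ge0 => i _; apply: sumr_ge0 => l _; rewrite -expr2 sqr_ge0.
Qed.

Lemma fnorm_sq a : fnorm a ^+ 2 = frob a a.
Proof. by rewrite /fnorm sqr_sqrtr // frob_ge0. Qed.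

Lemma fnorm_le a d : 0 <= d -> (fnorm a <= d) = (frob a a <= d ^+ 2).
Proof.
move=> d0; rewrite /fnorm -(ler_sqrt (frob a a)) ?exprn_ge0 //.
by rewrite sqrtr_sqr ger0_norm.
Qed.

Lemma entry_le_fnorm a j k d : fnorm a <= d -> `|a j k| <= d.
Proof.
move=> h; have d0 : 0 <= d by apply: le_trans h; exact: sqrtr_ge0.
move: h; rewrite fnorm_le // => h.
rewrite -(ler_pXn2r (n:=2)) // ?nnegrE ?normr_ge0 //.
by rewrite real_normK ?num_real //; apply: le_trans h; exact: frob_entry.
Qed.

Lemma frob_eq0 a : frob a a <= 0 -> a = 0.
Proof.
move=> h; apply/matrixP => j k; rewrite mxE.
have := le_trans (frob_entry a j k) h.
by rewrite expr2 -expr2 (le_eqVlt _ 0) ltNge sqr_ge0 orbF sqrf_eq0 => /eqP.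
Qed.

Lemma frob_bound a b e1 e2 : (forall j k, `|a j k| <= e1) ->
  (forall j k, `|b j k| <= e2) -> frob a b <= (J * K)%:R * (e1 * e2).
Proof.
move=> ha hb; rewrite /frob.
apply: le_trans (_ : \sum_(j < J) \sum_(k < K) (e1 * e2) <= _).
  apply: ler_sum => j _; apply: ler_sum => k _.
  apply: le_trans (ler_norm _) _; rewrite normrM.
  by apply: ler_pM => //; exact: normr_ge0.
rewrite sumr_const sumr_const !card_ord -mulrnA mulr_natl. by rewrite mulnC.
Qed.


Lemma Gobj_exp g w lam xi rho z : rho != 0 ->
  Gobj g w lam xi rho z =
  rho / 2 * frob (w + rho^-1 *: (lam - xi)) (w + rho^-1 *: (lam - xi))
  + frob (g - rho *: w - lam + xi) z + rho / 2 * frob z z.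
Proof.
move=> r0; rewrite /Gobj fnorm_sq.
set c := w + rho^-1 *: (lam - xi).
have -> : w - z + rho^-1 *: (lam - xi) = c - z.
  by apply/matrixP => i j; rewrite !mxE; ring.
have -> : g - rho *: w - lam + xi = g - rho *: c.
  by apply/matrixP => i j; rewrite !mxE; field.
clearbody c; rewrite !(frobDl, frobDr, frobNl, frobNr, frobZl) (frobC z c).
by field.
Qed.

Lemma Gobj_diff g g' w lam xi xi' rho z : rho != 0 ->
  Gobj g w lam xi rho z - Gobj g' w lam xi' rho z =
  (Gobj g w lam xi rho 0 - Gobj g' w lam xi' rho 0) + frob (g - g' + xi - xi') z.
Proof.
move=> r0; rewrite !Gobj_exp // !frob0r ?frob0l.
have -> : g - g' + xi - xi' = (g - rho *: w - lam + xi) - (g' - rho *: w - lam + xi').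
  by apply/matrixP => i j; rewrite !mxE; ring.
set q1 := g - rho *: w - lam + xi; set q2 := g' - rho *: w - lam + xi'.
rewrite (frobDl q1) frobNl; ring.
Qed.

Lemma Gobj_mid g w lam xi rho a b : rho != 0 ->
  Gobj g w lam xi rho (2^-1 *: a + (1 - 2^-1) *: b) =
  (Gobj g w lam xi rho a + Gobj g w lam xi rho b) / 2
  - rho / 8 * frob (a - b) (a - b).
Proof.
move=> r0; rewrite !Gobj_exp //.
rewrite !(frobDl, frobDr, frobNl, frobNr, frobZl, frobZr) (frobC b a).
by field.
Qed.

Section Argmin.
Variables (W : set mat) (zt : mat) (delta rho : R).
Hypotheses (convW : convex_mset W) (d0 : 0 < delta) (r0 : 0 < rho).
Let C := W `&` [set z | fnorm (z - zt) <= delta].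

Lemma C_mid a b : C a -> C b -> C (2^-1 *: a + (1 - 2^-1) *: b).
Proof.
move=> [Wa na] [Wb nb]; split.
  by apply: convW => //; rewrite invr_ge0 ler0n /= invf_le1 // ler1n.
have d0' : 0 <= delta := ltW d0.
move: na nb; rewrite /= !fnorm_le // => na nb.
have -> : 2^-1 *: a + (1 - 2^-1) *: b - zt = 2^-1 *: (a - zt) + 2^-1 *: (b - zt).
  by apply/matrixP => i j; rewrite !mxE; field.
have h := frob_ge0 ((a - zt) - (b - zt)).
move: na nb h; set a' := a - zt; set b' := b - zt; clearbody a' b' => na nb h.
rewrite !(frobDl, frobDr, frobNl, frobNr, frobZl, frobZr) in h *.
rewrite (frobC b') in h *; lra.
Qed.

Lemma argmin_strong g w lam xi a b : C a ->
  (forall z, C z -> Gobj g w lam xi rho a <= Gobj g w lam xi rho z) -> C b ->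
  Gobj g w lam xi rho a + rho / 4 * frob (a - b) (a - b) <= Gobj g w lam xi rho b.
Proof.
move=> Ca amin Cb.
have := amin _ (C_mid _ _ Ca Cb); rewrite Gobj_mid ?gt_eqF //.
move=> h; lra.
Qed.

Lemma argmin_shift g g' w lam xi a b : C a ->
  (forall z, C z -> Gobj g' w lam xi rho a <= Gobj g' w lam xi rho z) -> C b ->
  (forall z, C z -> Gobj g w lam (xi + (g' - g)) rho b <= Gobj g w lam (xi + (g' - g)) rho z) ->
  a = b.
Proof.
move=> Ca amin Cb bmin.
have h1 := argmin_strong _ _ _ _ _ _ Ca amin Cb.
have h2 := argmin_strong _ _ _ _ _ _ Cb bmin Ca.
have da := Gobj_diff g' g w lam xi (xi + (g' - g)) rho a (lt0r_neq0 r0).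
have db := Gobj_diff g' g w lam xi (xi + (g' - g)) rho b (lt0r_neq0 r0).
move: da db.
have -> : g' - g + xi - (xi + (g' - g)) = 0 by apply/matrixP => i j; rewrite !mxE; ring.
rewrite !frob0l => da db.
have eba : frob (b - a) (b - a) = frob (a - b) (a - b).
  by rewrite -opprB frobNl frobNr opprK.
rewrite eba in h2.
have hN : frob (a - b) (a - b) <= 0.
  have key : rho / 2 * frob (a - b) (a - b) <= 0 by lra.
  by rewrite -(@ler_pM2l _ (rho / 2)) ?mulr0 ?divr_gt0.
by apply/eqP; rewrite -subr_eq0; apply/eqP/frob_eq0.
Qed.

Lemma argmin_lip g w lam xi1 xi2 a b : C a ->
  (forall z, C z -> Gobj g w lam xi1 rho a <= Gobj g w lam xi1 rho z) -> C b ->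
  (forall z, C z -> Gobj g w lam xi2 rho b <= Gobj g w lam xi2 rho z) ->
  rho / 2 * frob (a - b) (a - b) <= frob (xi1 - xi2) (b - a).
Proof.
move=> Ca amin Cb bmin.
have h1 := argmin_strong _ _ _ _ _ _ Ca amin Cb.
have h2 := argmin_strong _ _ _ _ _ _ Cb bmin Ca.
have da := Gobj_diff g g w lam xi1 xi2 rho a (lt0r_neq0 r0).
have db := Gobj_diff g g w lam xi1 xi2 rho b (lt0r_neq0 r0).
move: da db.
have -> : g - g + xi1 - xi2 = xi1 - xi2 by apply/matrixP => i j; rewrite !mxE; ring.
move=> da db.
have eba : frob (b - a) (b - a) = frob (a - b) (a - b).
  by rewrite -opprB frobNl frobNr opprK.
rewrite eba in h2.
rewrite (frobDr _ _ (xi1 - xi2)) frobNr.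
lra.
Qed.

Lemma argmin_open g w lam (f : mat -> mat) :
  (forall x, C (f x) /\ forall z, C z -> Gobj g w lam x rho (f x) <= Gobj g w lam x rho z) ->
  forall U, open U -> open (f @^-1` U).
Proof.
move=> hf U oU; rewrite openE => x /= Ufx.
rewrite /interior; apply/nbhs_ballP.
have [e e0 he] := openP oU _ Ufx.
set M := (J * K)%:R : R.
have M0 : 0 <= M by rewrite /M ler0n.
pose eta := rho * e ^+ 2 / (4 * (M + 1) * delta).
have eta0 : 0 < eta.
  by rewrite /eta divr_gt0 ?mulr_gt0 ?exprn_gt0 // ltr_wpDl.
exists eta => // y /mxballE [_ hxy].
apply: he; apply/mxballE; split=> // i j.
have [Cx minx] := hf x; have [Cy miny] := hf y.
have L := argmin_lip g w lam x y (f x) (f y) Cx minx Cy miny.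
have B : frob (x - y) (f y - f x) <= M * (eta * (2 * delta)).
  apply: frob_bound => k l; rewrite !mxE; first exact: (ltW (hxy k l)).
  have -> : f y k l - f x k l = (f y - zt) k l - (f x - zt) k l by rewrite !mxE; ring.
  apply: le_trans (ler_normB _ _) _; rewrite mulr2n mulrDl !mul1r.
  by apply: lerD; apply: entry_le_fnorm; [case: Cy | case: Cx].
have E : M * (eta * (2 * delta)) = rho / 2 * (M / (M + 1) * e ^+ 2).
  rewrite /eta; field.
  by rewrite lt0r_neq0 ?ltr_wpDl // lt0r_neq0.
have N : frob (f x - f y) (f x - f y) <= M / (M + 1) * e ^+ 2.
  rewrite -(@ler_pM2l _ (rho / 2)) ?divr_gt0 //.
  by rewrite -E; apply: le_trans L B.
have t2 := frob_entry (f x - f y) i j; rewrite !mxE in t2.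
have lt1 : M / (M + 1) * e ^+ 2 < e ^+ 2.
  rewrite gtr_pMl ?exprn_gt0 // ltr_pdivrMr ?ltr_wpDl // mul1r.
  by rewrite ltrDl.
rewrite -(ltr_pXn2r (n:=2)) // ?nnegrE ?normr_ge0 ?ltW //.
rewrite real_normK ?num_real //; apply: (le_lt_trans _ lt1). exact: le_trans t2 N.
Qed.

End Argmin.
End Frob.

Definition shiftR (R : realType) (u : R) : measurableTypeR R -> measurableTypeR R := fun x => x + u.
Arguments shiftR {R}.
Lemma mshiftR (R : realType) (u : R) : measurable_fun setT (shiftR u).
Proof. by apply: measurable_realfun.measurable_funD. Qed.
Arguments mshiftR {R}.
HB.instance Definition _ (R : realType) (u : R) := isMeasurableFun.Build _ _ _ _ (shiftR u) (mshiftR u).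

Lemma push_leb (R : realType) (u : R) (A : set R) : measurable A ->
  pushforward lebesgue_measure (shiftR u) A = lebesgue_measure A.
Proof.
move=> mA; apply/esym/lebesgue_measure_unique => //= _ [[a b]] _ <-.
rewrite /pushforward.
have -> : shiftR u @^-1` `]a, b] = `]a - u, b - u]%classic.
  by apply/seteqP; split => x /=; rewrite !in_itv /= /shiftR !lerBrDr ltrBlDr.
rewrite !lebesgue_measure_itv /= !lte_fin ltrD2r.
by case: ifP => // _; rewrite -!EFinD opprB addrA subrK.
Qed.

Lemma int_shift (R : realType) (u : R) (I : set R) (f : R -> \bar R) :
  measurable I -> measurable_fun setT f -> (forall x, (0 <= f x)%E) ->
  (\int[lebesgue_measure]_(x in shiftR u @^-1` I) f x =
   \int[lebesgue_measure]_(x in I) f ((x : R) - u)%R)%E.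
Proof.
move=> mI mf f0.
transitivity (\int[lebesgue_measure]_(x in shiftR u @^-1` I)
   (((fun y : R => f (y - u)%R) \o shiftR u) x))%E.
  by apply: eq_integral => x _; rewrite /= /shiftR addrK.
rewrite -ge0_integral_pushforward //.
- by apply: eq_measure_integral => // A mA _; rewrite /= push_leb.
- apply: measurable_funTS; exact: (measurableT_comp mf (mshiftR (- u))).
Qed.

Lemma mpdf (R : realType) (b : R) : measurable_fun setT (laplace_pdf b).
Proof.
rewrite /laplace_pdf; apply: measurable_funM => //.
apply: measurableT_comp; first exact: measurable_expR.
apply: measurableT_comp => //.
apply: measurable_funM => //; exact: normr_measurable.
Qed.

Lemma pdf_shift_le (R : realType) (b u w x : R) : 0 < b ->
  laplace_pdf b (x - u) <= expR (`|u - w| / b) * laplace_pdf b (x - w).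
Proof.
move=> b0; rewrite /laplace_pdf mulrCA; apply: ler_wpM2l.
  by rewrite invr_ge0 mulr_ge0 // ltW.
rewrite -expRD ler_expR.
have t : `|x - w| <= `|x - u| + `|u - w|.
  by rewrite (_ : x - w = (x - u) + (u - w)) ?ler_normD //; ring.
rewrite -!mulNr -mulrDl ler_pM2r ?invr_gt0 //; lra.
Qed.

Lemma laplace_1d (R : realType) (b : R) (u w : R) (I : set R) : 0 < b -> measurable I ->
  (\int[lebesgue_measure]_(x in shiftR u @^-1` I) (laplace_pdf b x)%:E <=
   (expR (`|u - w| / b))%:E * \int[lebesgue_measure]_(x in shiftR w @^-1` I) (laplace_pdf b x)%:E)%E.
Proof.
move=> b0 mI.
have mp := @mpdf R b.
have p0 : forall x, 0 <= laplace_pdf b x.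
  by move=> x; rewrite /laplace_pdf mulr_ge0 ?expR_ge0 // invr_ge0 mulr_ge0 // ltW.
rewrite !int_shift //; try exact/measurable_EFinP; try by move=> x; rewrite lee_fin.
rewrite -ge0_integralZl //; last 2 first.
- apply/measurable_EFinP; apply: measurable_funTS.
  exact: (measurableT_comp mp (mshiftR (- w))).
- by move=> x _; rewrite lee_fin.
apply: ge0_le_integral => //.
- by move=> x _; rewrite lee_fin.
- apply/measurable_EFinP; apply: measurable_funTS.
  exact: (measurableT_comp mp (mshiftR (- u))).
- apply/measurable_EFinP; apply: measurable_funTS.
  apply: measurable_funM => //.
  exact: (measurableT_comp mp (mshiftR (- w))).
- by move=> x _; rewrite -EFinM lee_fin pdf_shift_le.
Qed.


Lemma floor_divk (R : realType) (k : nat) (x : R) : (0 < k)%N ->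
  Num.floor (x / k%:R) = Num.floor ((Num.floor x)%:~R / k%:R : R).
Proof.
move=> k0; set z := Num.floor x; set m := Num.floor ((z%:~R : R) / k%:R).
have kR : 0 < (k%:R : R) by rewrite ltr0n.
have /andP[h1 h2] := floor_itv ((z%:~R : R) / k%:R); rewrite -/m in h1 h2.
have /andP[hz1 hz2] := floor_itv x; rewrite -/z in hz1 hz2.
apply: floor_def; apply/andP; split.
  by apply: le_trans h1 _; rewrite ler_pM2r ?invr_gt0.
have kk : (k%:R : R) = (k%:Z)%:~R by [].
have h3 : z < k%:Z * (m + 1).
  rewrite -(ltr_int R) intrM -kk mulrC -ltr_pdivrMr //.
have h4 : (z + 1)%:~R <= ((k%:Z * (m + 1))%:~R : R).
  by rewrite ler_int lezD1.
rewrite ltr_pdivrMr // mulrC kk.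
apply: lt_le_trans hz2 _; apply: le_trans h4 _; by rewrite intrM.
Qed.

Lemma floor_nest (R : realType) (n m : nat) (s t : R) : (n <= m)%N ->
  Num.floor (2 ^+ m * s) = Num.floor (2 ^+ m * t) ->
  Num.floor (2 ^+ n * s) = Num.floor (2 ^+ n * t).
Proof.
move=> nm H.
have e : forall s : R, 2 ^+ n * s = (2 ^+ m * s) / ((2 ^ (m - n))%N)%:R.
  move=> y; rewrite natrX.
  have -> : (2 : R) ^+ m = 2 ^+ n * 2 ^+ (m - n) by rewrite -exprD subnKC.
  by field; rewrite expf_neq0.
by rewrite !e floor_divk ?expn_gt0 // H -floor_divk ?expn_gt0.
Qed.

Set Implicit Arguments.
Unset Strict Implicit.
Section Cells.
Variables (R : realType) (J K : nat).
Local Notation mat := 'M[R]_(J, K).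

Definition qc (n : nat) (x : mat) : 'M[int]_(J, K) :=
  \matrix_(j, k) Num.floor (2 ^+ n * x j k).
Definition Sat n (A : set mat) := forall x y, qc n x = qc n y -> A x -> A y.
Definition Acl := [set A : set mat | exists n, Sat n A].

Lemma qc_nest n m x y : (n <= m)%N -> qc m x = qc m y -> qc n x = qc n y.
Proof.
move=> nm /matrixP H; apply/matrixP => j k; rewrite !mxE.
by apply: floor_nest nm _; have := H j k; rewrite !mxE.
Qed.

Lemma Sat_mono n m A : (n <= m)%N -> Sat n A -> Sat m A.
Proof. by move=> nm h x y /(qc_nest nm); exact: h. Qed.

Lemma Acl_ring : setring Acl.
Proof.
split.
- by exists 0%N.
- move=> A B [n hA] [m hB]; exists (maxn n m) => x y e [Ax|Bx].
  + by left; apply: (Sat_mono (leq_maxl n m) hA) e Ax.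
  + by right; apply: (Sat_mono (leq_maxr n m) hB) e Bx.
- move=> A B [n hA] [m hB]; exists (maxn n m) => x y e [Ax nBx]; split.
  + by apply: (Sat_mono (leq_maxl n m) hA) e Ax.
  + move=> By; apply: nBx; apply: (Sat_mono (leq_maxr n m) hB) (esym e) By.
Qed.

Lemma qc_close n x y j k : qc n x = qc n y -> `|x j k - y j k| < (2 ^+ n)^-1.
Proof.
move=> /matrixP /(_ j k); rewrite !mxE => e.
have p0 : 0 < (2 : R) ^+ n by rewrite exprn_gt0.
have /andP[a1 a2] := floor_itv (2 ^+ n * x j k).
have /andP[b1 b2] := floor_itv (2 ^+ n * y j k).
rewrite e in a1 a2.
have -> : x j k - y j k = (2 ^+ n)^-1 * (2 ^+ n * x j k - 2 ^+ n * y j k).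
  by field; rewrite lt0r_neq0.
rewrite normrM ger0_norm ?invr_ge0 ?ltW // gtr_pMr ?invr_gt0 //.
rewrite ltr_norml; apply/andP; split.
  by move: a2 b1; rewrite intrD; lra.
by move: a1 b2; rewrite intrD; lra.
Qed.

Lemma open_Acl U : open U ->
  U = \bigcup_n [set x | forall y, qc n y = qc n x -> U y].
Proof.
move=> oU; apply/seteqP; split => [x Ux|x [n _ /= h]]; last exact: h.
have [e e0 he] := openP oU _ Ux.
set N := Num.trunc e^-1.
exists N.+1 => // y qy; apply: he; apply/mxballE; split => // i j.
apply: lt_trans (qc_close i j (esym qy)) _.
have p0 : 0 < (2 : R) ^+ N.+1 by rewrite exprn_gt0.
rewrite invf_plt ?posrE //.
apply: lt_le_trans (truncnS_gt _) _; rewrite -/N.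
rewrite -natrX ler_nat; apply: ltnW; exact: ltn_expl.
Qed.

Lemma Acl_piece U n : Acl [set x | forall y, qc n y = qc n x -> U y].
Proof.
by exists n => x y e /= h z ez; apply: h; rewrite ez e.
Qed.

End Cells.

Set Implicit Arguments.
Unset Strict Implicit.

Lemma prod_le (R : realType) (I : Type) (r : seq I) (a c' : I -> \bar R) (c : I -> R) :
  (forall i, (0 <= a i)%E) -> (forall i, (0 <= c' i)%E) -> (forall i, 0 <= c i) ->
  (forall i, (a i <= (c i)%:E * c' i)%E) ->
  (\prod_(i <- r) a i <= (\prod_(i <- r) c i)%:E * \prod_(i <- r) c' i)%E.
Proof.
move=> a0 c'0 c0 h; elim: r => [|x r IH]; first by rewrite !big_nil mul1e.
rewrite !big_cons EFinM muleACA.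
apply: lee_pmul => //.
- by apply: prode_ge0.
Qed.

Section Meas.
Variables (R : realType) (J K : nat) (d : measure_display) (Omega : measurableType d)
  (Pr : probability Omega R) (xi : 'I_J -> 'I_K -> Omega -> R) (b : R).
Local Notation mat := 'M[R]_(J, K).
Hypotheses (b0 : 0 < b) (mxi : forall j k, measurable_fun setT (xi j k))
 (law : forall j k (B : set R), measurable B ->
     Pr (xi j k @^-1` B) = (\int[lebesgue_measure]_(x in B) (laplace_pdf b x)%:E)%E)
 (indep : forall B : 'I_J -> 'I_K -> set R, (forall j k, measurable (B j k)) ->
     Pr [set om | forall j k, B j k (xi j k om)] =
     (\prod_(j < J) \prod_(k < K) Pr (xi j k @^-1` B j k))%E).

Definition Xi om : mat := \matrix_(j, k) xi j k om.
Definition ev (u : mat) (A : set mat) := [set om | A (Xi om + u)].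

Lemma mpre_R (f : R -> R) B : measurable_fun setT f -> measurable B -> measurable (f @^-1` B).
Proof. by move=> mf mB; rewrite -[f @^-1` B]setTI; exact: mf. Qed.

Definition Iz n (z : int) : set R := [set r | Num.floor (2 ^+ n * r) = z].

Lemma mIz n z : measurable (Iz n z).
Proof.
have -> : Iz n z = (fun r => 2 ^+ n * r) @^-1` `[z%:~R, (z + 1)%:~R[%classic.
  apply/seteqP; split => r /=; rewrite in_itv /= -floor_eq.
    by move=> ->.
  by move/eqP.
apply: mpre_R => //; exact: measurable_funM.
Qed.

Lemma ev_cell n s u : ev u [set x | qc n x = s] =
  [set om | forall j k, (shiftR (u j k) @^-1` Iz n (s j k)) (xi j k om)].
Proof.
apply/seteqP; split => om /=.
  by move/matrixP => H j k; have := H j k; rewrite !mxE.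
by move=> H; apply/matrixP => j k; rewrite !mxE; exact: H j k.
Qed.

Lemma mB n (s : 'M[int]_(J, K)) (u : mat) j k : measurable (shiftR (u j k) @^-1` Iz n (s j k)).
Proof. by apply: mpre_R; [exact: mshiftR | exact: mIz]. Qed.

Lemma mev_cell n s u : measurable (ev u [set x | qc n x = s]).
Proof.
rewrite ev_cell.
have -> : [set om | forall j k, (shiftR (u j k) @^-1` Iz n (s j k)) (xi j k om)] =
  \bigcap_(j in [set: 'I_J]) \bigcap_(k in [set: 'I_K])
     (xi j k @^-1` (shiftR (u j k) @^-1` Iz n (s j k))).
  apply/seteqP; split => om /= h.
    by move=> j _ k _; exact: h.
  by move=> j k; exact: (h j I k I).
apply: fin_bigcap_measurable; first exact: finite_finset.
move=> j _; apply: fin_bigcap_measurable; first exact: finite_finset.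
move=> k _; rewrite -[X in measurable X]setTI; apply: mxi => //; exact: mB.
Qed.

Definition cfac (u w : mat) := expR (l1norm (u - w) / b).

Lemma cell_ineq n s u w :
  (Pr (ev u [set x | qc n x = s]) <= (cfac u w)%:E * Pr (ev w [set x | qc n x = s]))%E.
Proof.
rewrite !ev_cell.
rewrite (indep (B := fun j k => shiftR (u j k) @^-1` Iz n (s j k))) ?(indep (B := fun j k => shiftR (w j k) @^-1` Iz n (s j k))); try by move=> j k; exact: mB.
have -> : cfac u w = \prod_(j < J) \prod_(k < K) expR (`|u j k - w j k| / b).
  rewrite /cfac /l1norm mulr_suml expR_sum; apply: eq_bigr => j _.
  by rewrite mulr_suml expR_sum; apply: eq_bigr => k _; rewrite !mxE.
apply: prod_le.
- by move=> j; apply: prode_ge0 => k _; exact: measure_ge0.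
- by move=> j; apply: prode_ge0 => k _; exact: measure_ge0.
- by move=> j; apply: prodr_ge0 => k _; exact: expR_ge0.
move=> j; apply: prod_le.
- by move=> k; exact: measure_ge0.
- by move=> k; exact: measure_ge0.
- by move=> k; exact: expR_ge0.
move=> k; rewrite !law; try exact: mB.
exact: laplace_1d b0 (mIz _ _).
Qed.

Definition Lcl (u w : mat) := [set A : set mat | measurable (ev u A) /\ measurable (ev w A) /\
  (Pr (ev u A) <= (cfac u w)%:E * Pr (ev w A))%E].

Lemma Acl_Lcl (u w : mat) : @Acl R J K `<=` Lcl u w.
Proof.
move=> A [n hA].
pose F k := [set x : mat | A x /\ pickle_inv k = Some (qc n x)].
have AF : A = \bigcup_k F k.
  apply/seteqP; split => [x Ax|x [k _ [Ax _]] //].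
  by exists (pickle (qc n x)) => //; split => //; rewrite pickleK_inv.
have evF v : ev v A = \bigcup_k ev v (F k).
  by rewrite {1}AF; apply/seteqP; split => om /=.
have Fk k : F k = set0 \/ exists s, F k = [set x | qc n x = s].
  case E : (pickle_inv k) => [s|]; last first.
    by left; apply/seteqP; split => x // [_]; rewrite E.
  have [[x0 [Ax0 qx0]]|nex] := pselect (exists x, A x /\ qc n x = s).
    right; exists s; apply/seteqP; split => x /=.
      by move=> [_]; rewrite E => -[->].
    move=> qx; split; first by apply: (hA x0) => //; rewrite qx0 qx.
    by rewrite E qx.
  left; apply/seteqP; split => x // [Ax]; rewrite E => -[qx].
  by apply: nex; exists x; split.
have mF v k : measurable (ev v (F k)).
  by case: (Fk k) => [->|[s ->]]; [exact: measurable0 | exact: mev_cell].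
have tF v : trivIset setT (fun k => ev v (F k)).
  apply/trivIsetP => i j _ _ ij; apply/seteqP; split => // om /= [[_ hi] [_ hj]].
  move: ij; have := @pickle_invK 'M[int]_(J, K) i; have := @pickle_invK 'M[int]_(J, K) j.
  by rewrite hi hj /= => <- <-; rewrite eqxx.
have mU v : measurable (ev v A) by rewrite evF; exact: bigcupT_measurable.
split; first exact: mU.
split; first exact: mU.
rewrite !evF !measure_bigcup //.
rewrite -nneseriesZl; last by move=> i _; exact: measure_ge0.
apply: lee_nneseries; first by move=> i _ _; exact: measure_ge0.
move=> k _; case: (Fk k) => [->|[s ->]]; last exact: cell_ineq.
have -> : ev u set0 = set0 by apply/seteqP; split.
have -> : ev w set0 = set0 by apply/seteqP; split.
by rewrite measure0 mule0.
Qed.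

Lemma Lcl_monotone (u w : mat) : monotone (Lcl u w).
Proof.
have cfin : (cfac u w)%:E \is a fin_num by [].
split.
- move=> F ndF LF.
  have evU v : ev v (\bigcup_n F n) = \bigcup_n ev v (F n) by apply/seteqP; split.
  have mEu n : measurable (ev u (F n)) by case: (LF n).
  have mEw n : measurable (ev w (F n)) by case: (LF n) => _ [].
  have nd v : {homo (fun n => ev v (F n)) : n m / (n <= m)%N >-> (n <= m)%O}.
    move=> n m nm; have := ndF n m nm; move/subsetPset => sb.
    by apply/subsetPset => om; apply: sb.
  have mUu : measurable (ev u (\bigcup_n F n)) by rewrite evU; exact: bigcupT_measurable.
  have mUw : measurable (ev w (\bigcup_n F n)) by rewrite evU; exact: bigcupT_measurable.
  split => //; split => //.
  have ha := @nondecreasing_cvg_mu _ _ _ Pr (fun n => ev u (F n)) mEu (eq_ind _ _ mUu _ (evU u)) (nd u).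
  have hb := @nondecreasing_cvg_mu _ _ _ Pr (fun n => ev w (F n)) mEw (eq_ind _ _ mUw _ (evU w)) (nd w).
  have hcb := cvgeZl cfin hb.
  rewrite !evU -(cvg_lim _ ha) // -(cvg_lim _ hcb) //.
  apply: lee_lim; [exact: cvgP ha | exact: cvgP hcb |].
  by apply: nearW => n /=; case: (LF n) => _ [].
- move=> F niF LF.
  have evI v : ev v (\bigcap_n F n) = \bigcap_n ev v (F n) by apply/seteqP; split.
  have mEu n : measurable (ev u (F n)) by case: (LF n).
  have mEw n : measurable (ev w (F n)) by case: (LF n) => _ [].
  have ni v : {homo (fun n => ev v (F n)) : n m / (n <= m)%N >-> (m <= n)%O}.
    move=> n m nm; have := niF n m nm; move/subsetPset => sb.
    by apply/subsetPset => om; apply: sb.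
  have mIu : measurable (ev u (\bigcap_n F n)) by rewrite evI; exact: bigcapT_measurable.
  have mIw : measurable (ev w (\bigcap_n F n)) by rewrite evI; exact: bigcapT_measurable.
  split => //; split => //.
  have fin v : measurable (ev v (F 0%N)) -> (Pr (ev v (F 0%N)) < +oo)%E.
    by move=> mv; apply: le_lt_trans (probability_le1 _ mv) _; exact: ltey.
  have ha := @nonincreasing_cvg_mu _ _ _ Pr (fun n => ev u (F n)) (fin _ (mEu 0%N)) mEu (eq_ind _ _ mIu _ (evI u)) (ni u).
  have hb := @nonincreasing_cvg_mu _ _ _ Pr (fun n => ev w (F n)) (fin _ (mEw 0%N)) mEw (eq_ind _ _ mIw _ (evI w)) (ni w).
  have hcb := cvgeZl cfin hb.
  rewrite !evI -(cvg_lim _ ha) // -(cvg_lim _ hcb) //.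
  apply: lee_lim; [exact: cvgP ha | exact: cvgP hcb |].
  by apply: nearW => n /=; case: (LF n) => _ [].
Qed.

Lemma borel_Lcl (u w : mat) A : mx_borel A -> Lcl u w A.
Proof.
move=> hA.
have sub := monotone_setring_sub_g_sigma_ring (Lcl_monotone u w) (@Acl_ring R J K) (Acl_Lcl u w).
apply: sub; apply: hA; split.
- have [S0 SD SU] := smallest_sigma_ring (@Acl R J K).
  have ST : <<sr @Acl R J K >> setT by apply: sub_g_sigma_ring; exists 0%N.
  split => // B hB; exact: SD.
- move=> U oU; have [S0 SD SU] := smallest_sigma_ring (@Acl R J K).
  rewrite (open_Acl oU); apply: SU => n; apply: sub_g_sigma_ring; exact: Acl_piece.
Qed.

End Meas.

Unset Implicit Arguments.
Set Strict Implicit.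

Lemma borel_preimage (R : realType) J K (f : 'M[R]_(J, K) -> 'M[R]_(J, K)) :
  (forall U, open U -> open (f @^-1` U)) ->
  forall S, mx_borel S -> mx_borel (f @^-1` S).
Proof.
move=> hf S hS; apply: (hS [set B | mx_borel (f @^-1` B)]); split.
- have [S0 SC SU] := smallest_sigma_algebra setT [set U : set 'M[R]_(J, K) | open U].
  split.
  + by rewrite /= preimage_set0.
  + move=> B hB /=.
    have -> : f @^-1` (setT `\` B) = setT `\` (f @^-1` B) by apply/seteqP; split => x /=.
    exact: SC.
  + by move=> F hF /=; rewrite preimage_bigcup; exact: SU.
- by move=> U oU /=; apply: sub_sigma_algebra; exact: hf.
Qed.

Lemma l1normN (R : realType) J K (a : 'M[R]_(J, K)) : l1norm (- a) = l1norm a.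
Proof. by apply: eq_bigr => j _; apply: eq_bigr => k _; rewrite mxE normrN. Qed.

Lemma l1norm_ge0 (R : realType) J K (a : 'M[R]_(J, K)) : 0 <= l1norm a.
Proof. by apply: sumr_ge0 => j _; apply: sumr_ge0 => k _; exact: normr_ge0. Qed.

Theorem theorem3 (R : realType) (P J K : nat) (p : 'I_P) (Ip : 'I_P -> nat)
  (phi : 'M[R]_(J, K) -> 'cV[R]_J -> 'cV[R]_K -> R) (r : 'M[R]_(J, K) -> R)
  (beta : R)
  (fprime : seq (datum R J K) -> 'M[R]_(J, K) -> 'M[R]_(J, K))
  (W : set 'M[R]_(J, K))
  (w lam zt : 'M[R]_(J, K)) (rho delta eps Delta : R)
  (Dp : seq (datum R J K))
  (d : measure_display) (Omega : measurableType d) (Pr : probability Omega R)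
  (xi : 'I_J -> 'I_K -> Omega -> R)
  (znext : seq (datum R J K) -> 'M[R]_(J, K) -> 'M[R]_(J, K)) :
  (0 < P)%N -> (0 < J)%N -> (0 < K)%N -> 0 < beta ->
  (* convex loss and regularizer *)
  (forall x y, convex_fun (fun z => phi z x y)) -> convex_fun r ->
  (* f'_p(z; D) is a (fixed) subgradient of f_p(.; D) at z *)
  (forall D z, is_subgradient
     (fobj (\sum_(q < P) Ip q) P beta phi r D) z (fprime D z)) ->
  (* W compact convex *)
  compact W -> convex_mset W ->
  0 < rho -> 0 < delta -> 0 < eps ->
  (* the data of agent p *)
  size Dp = Ip p ->
  (* Delta = max over neighbours of the l1-sensitivity *)
  (forall D', neighbor Dp D' -> l1norm (fprime Dp zt - fprime D' zt) <= Delta) ->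
  (exists D', neighbor Dp D' /\ l1norm (fprime Dp zt - fprime D' zt) = Delta) ->
  (* noise entries: random variables *)
  (forall j k, measurable_fun setT (xi j k)) ->
  (* each entry Laplace(0, Delta / eps) *)
  (forall j k (B : set R), measurable B ->
     Pr (xi j k @^-1` B) =
     (\int[lebesgue_measure]_(x in B) (laplace_pdf (Delta / eps) x)%:E)%E) ->
  (* entries mutually independent *)
  (forall B : 'I_J -> 'I_K -> set R, (forall j k, measurable (B j k)) ->
     Pr [set om | forall j k, B j k (xi j k om)] =
     (\prod_(j < J) \prod_(k < K) Pr (xi j k @^-1` B j k))%E) ->
  (* znext D xi0 is the argmin of G^t(.; D, xi0) over W /\ hat W^t_p *)
  (forall D (xi0 : 'M[R]_(J, K)),
     (W `&` [set z | fnorm (z - zt) <= delta]) (znext D xi0) /\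
     (forall z, (W `&` [set z | fnorm (z - zt) <= delta]) z ->
        Gobj (fprime D zt) w lam xi0 rho (znext D xi0)
          <= Gobj (fprime D zt) w lam xi0 rho z)) ->
  forall S : set 'M[R]_(J, K), mx_borel S ->
  forall D', neighbor Dp D' ->
  ((expR (- eps))%:E *
     Pr [set om | S (znext D' (\matrix_(j, k) xi j k om))]
   <= Pr [set om | S (znext Dp (\matrix_(j, k) xi j k om))]
   /\
   Pr [set om | S (znext Dp (\matrix_(j, k) xi j k om))]
   <= (expR eps)%:E *
      Pr [set om | S (znext D' (\matrix_(j, k) xi j k om))])%E.
Proof.
move=> hP hJ hK hbeta hphi hr hsub hW hconv hrho hdelta heps hsize hsens hex
  hmeas hlaw hindep hz S hS D' hD'.
set b := Delta / eps.
have hD0 : 0 <= Delta by case: hex => D0 [_ <-]; exact: l1norm_ge0.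
have hDpos : 0 < Delta.
  rewrite lt_neqAle hD0 andbT; apply/eqP => D0.
  have := hlaw (Ordinal hJ) (Ordinal hK) setT measurableT.
  rewrite preimage_setT probability_setT.
  rewrite integral0_eq //; last first.
    by move=> x _; rewrite -D0 mul0r /laplace_pdf mulr0 invr0 mul0r.
  by move=> /eqP; rewrite eqe oner_eq0.
have b0 : 0 < b by apply: divr_gt0.
set g := fprime Dp zt; set g' := fprime D' zt; set v := g' - g.
have shift xi0 : znext D' xi0 = znext Dp (xi0 + v).
  have [Ca amin] := hz D' xi0; have [Cb bmin] := hz Dp (xi0 + v).
  exact: (@argmin_shift _ _ _ W zt delta rho hconv hdelta hrho g g' w lam xi0 _ _ Ca amin Cb bmin).
set f := znext Dp.
have fo := @argmin_open _ _ _ W zt delta rho hconv hdelta hrho g w lam f (hz Dp).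
set A := f @^-1` S.
have hA : mx_borel A by apply: borel_preimage.
have E1 : [set om | S (znext D' (\matrix_(j, k) xi j k om))] = ev xi v A.
  by apply/seteqP; split => om /=; rewrite shift.
have E0 : [set om | S (znext Dp (\matrix_(j, k) xi j k om))] = ev xi 0 A.
  by apply/seteqP; split => om; rewrite /ev /= addr0.
rewrite E1 E0.
have lv : l1norm v <= Delta.
  by rewrite /v -opprB l1normN; exact: hsens.
have cle (u u' : 'M[R]_(J, K)) : l1norm (u - u') <= Delta -> cfac b u u' <= expR eps.
  move=> h; rewrite /cfac ler_expR /b ler_pdivrMr ?divr_gt0 //.
  by rewrite mulrCA mulfV ?lt0r_neq0 // mulr1.
have [_ [_ L1]] := borel_Lcl b0 hmeas hlaw hindep v 0 hA.
have [_ [_ L2]] := borel_Lcl b0 hmeas hlaw hindep 0 v hA.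
have c1 : cfac b v 0 <= expR eps by apply: cle; rewrite subr0.
have c2 : cfac b 0 v <= expR eps by apply: cle; rewrite sub0r l1normN.
split.
- apply: le_trans (lee_wpmul2l _ L1) _; first by rewrite lee_fin expR_ge0.
  rewrite muleA -EFinM.
  apply: le_trans (_ : (expR (- eps) * expR eps)%:E * Pr (ev xi 0 A) <= _)%E.
    apply: lee_wpmul2r; first exact: measure_ge0.
    by rewrite lee_fin ler_wpM2l ?expR_ge0.
  by rewrite expRN mulVf ?gt_eqF ?expR_gt0 // mul1e.
- apply: le_trans L2 _; apply: lee_wpmul2r; first exact: measure_ge0.
  by rewrite lee_fin.
Qed.
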